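(* Let $n\in\mathbb{N}_0$ and $\alpha>0$. For $u,v$ in the open unit disk $\mathbb{D}=\{u\in\mathbb{C}:|u|<1\}$ with $u\neq v$ define $$H_n^\alpha(u,v)=\frac{|u|^{2n}\,|1-\overline{u}v|^{2(n+\alpha+1)}}{|u-v|^{2n}\,(1-|v|^2)^{\alpha+1}}.$$ Let $0<R<1$, let $v\in(0,1)$ be a positive real number with $v<R$, and let $u=|u|e^{-i\varphi}$ with $\varphi\in\mathbb{R}$ and $R\le |u|<1$. If $|\varphi|\le 1-vR$, then $$H_n^\alpha(u,v)\le 2^{n+\alpha+1}\frac{(1-vR)^{2n+\alpha+1}}{(1-v/R)^{2n}}.$$
   Context: Here $\mathbb{N}_0=\{0,1,2,\dots\}$; for $n=0$ the factors with exponent $2n$ are equal to $1$. *)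

(* Defs.v *)
From Stdlib Require Import Reals.
From Coquelicot Require Import Coquelicot.
Open Scope R_scope.

(* Real exponents are taken via Rpower (bases are positive on the domain). *)
Definition H (n : nat) (alpha : R) (u v : C) : R :=
  (Cmod u ^ (2 * n) * Rpower (Cmod (Cminus 1 (Cmult (Cconj u) v))) (2 * (INR n + alpha + 1)))
  / (Cmod (Cminus u v) ^ (2 * n) * Rpower (1 - Cmod v ^ 2) (alpha + 1)).

Definition cexpi (t : R) : C := (cos t, sin t).

(* Main.v *)
Require Import Defs.
From Stdlib Require Import Reals Lra.
From Coquelicot Require Import Coquelicot.
Open Scope R_scope.
Lemma sin_sq_le t : Rabs t <= 1 -> sin t * sin t <= t * t.
Proof.
  intros Ht.
  assert (HP : 1 <= PI) by (pose proof PI2_1; lra).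
  assert (K : forall s, 0 <= s <= 1 -> sin s * sin s <= s * s).
  { intros s [h0 h1]. destruct (Req_dec s 0) as [->|hs]. rewrite sin_0; lra.
    pose proof (sin_lt_x s ltac:(lra)). pose proof (sin_ge_0 s h0 ltac:(lra)). nra. }
  destruct (Rle_dec 0 t).
  - apply K. split; [lra|]. rewrite Rabs_right in Ht; lra.
  - rewrite Rabs_left in Ht by lra.
    replace (sin t * sin t) with (sin (-t) * sin (-t)) by (rewrite sin_neg; ring).
    replace (t*t) with ((-t)*(-t)) by ring. apply K; lra.
Qed.
Lemma one_m_cos p : Rabs p <= 1 -> 1 - cos p <= p * p / 2.
Proof.
  intros Hp. replace p with (2 * (p/2)) at 1 by field. rewrite cos_2a_sin.
  pose proof (sin_sq_le (p/2) ltac:(revert Hp; unfold Rabs; destruct (Rcase_abs p), (Rcase_abs (p/2)); lra)). lra.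
Qed.
Lemma div_le a b c d : 0<b -> 0<d -> a*d <= c*b -> a/b <= c/d.
Proof.
  intros hb hd h. unfold Rdiv. apply (Rmult_le_reg_r (b*d)); [nra|].
  replace (a*/b*(b*d)) with (a*d) by (field; lra).
  replace (c*/d*(b*d)) with (c*b) by (field; lra). exact h.
Qed.

Theorem lemma1 (n : nat) (alpha : R) (Rr : R) (v : R) (u : C) (phi : R) :
  0 < alpha ->
  0 < Rr -> Rr < 1 ->
  0 < v -> v < Rr ->
  u = Cmult (RtoC (Cmod u)) (cexpi (- phi)) ->
  Rr <= Cmod u -> Cmod u < 1 ->
  Rabs phi <= 1 - v * Rr ->
  H n alpha u (RtoC v) <=
    Rpower 2 (INR n + alpha + 1) * Rpower (1 - v * Rr) (2 * INR n + alpha + 1)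
    / (1 - v / Rr) ^ (2 * n).
Proof.
  intros Ha HR0 HR1 Hv0 HvR Hu Hru Hr1 Hphi.
  set (r := Cmod u) in *.
  assert (EA : Cmod (Cminus 1 (Cmult (Cconj u) (RtoC v))) ^ 2 = 1 - 2*r*v*cos phi + r*r*v*v).
  { rewrite Hu. unfold Cmod at 1. rewrite pow2_sqrt by (apply Rplus_le_le_0_compat; apply pow2_ge_0).
    unfold Cminus, Cmult, Cconj, cexpi, RtoC, Cplus, Copp; simpl. rewrite cos_neg, sin_neg.
    pose proof (sin2_cos2 phi). unfold Rsqr in *. nra. }
  assert (EB : Cmod (Cminus u (RtoC v)) ^ 2 = r*r - 2*r*v*cos phi + v*v).
  { rewrite Hu at 1. unfold Cmod at 1. rewrite pow2_sqrt by (apply Rplus_le_le_0_compat; apply pow2_ge_0).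
    unfold Cminus, Cmult, Cconj, cexpi, RtoC, Cplus, Copp; simpl. rewrite cos_neg, sin_neg.
    pose proof (sin2_cos2 phi). unfold Rsqr in *. nra. }
  set (A := Cmod (Cminus 1 (Cmult (Cconj u) (RtoC v)))) in *.
  set (B := Cmod (Cminus u (RtoC v))) in *.
  pose proof (COS_bound phi) as Hc.
  pose proof (one_m_cos phi ltac:(nra)) as Hc2.
  assert (HA0 : 0 <= A) by apply Cmod_ge_0.
  assert (HB0 : 0 <= B) by apply Cmod_ge_0.
  assert (HA : 0 < A).
  { destruct (Req_dec A 0) as [e|]; [|lra]. rewrite e in EA. assert (0 < r*v < 1) by nra. assert (r*v*cos phi <= r*v) by nra. simpl in EA. nra. }
  assert (HB : r * (1 - v/Rr) <= B).
  { assert (r - v <= B). { apply Rsqr_incr_0_var; [rewrite !Rsqr_pow2, EB; assert (0 <= r*v) by nra; assert (r*v*cos phi <= r*v) by nra; nra | lra]. }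
    assert (r * (v/Rr) >= v).
    { unfold Rdiv. replace v with (Rr * (v * /Rr)) at 2 by (field; lra).
      assert (0 < v * / Rr) by (apply Rmult_lt_0_compat; [lra|apply Rinv_0_lt_compat; lra]). nra. }
    nra. }
  assert (HD : 0 < 1 - v / Rr).
  { unfold Rdiv. assert (Rr * / Rr = 1) by (field; lra). assert (0 < / Rr) by (apply Rinv_0_lt_compat; lra). nra. }
  assert (HBp : 0 < B) by nra.
  assert (HA2 : A^2 <= 2 * (1 - v*Rr)^2).
  { assert (r*v*(phi*phi) <= (1-v*Rr)^2).
    { assert (phi*phi <= (1-v*Rr)^2).
      { revert Hphi. unfold Rabs; destruct (Rcase_abs phi); nra. }
      assert (0 <= r * v <= 1) by nra. nra. }
    assert (v*Rr <= r*v) by nra. assert (r*v < 1) by nra. assert ((1 - r*v)^2 <= (1-v*Rr)^2) by (apply pow_incr; lra).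
    assert (0 <= r*v) by nra. assert (r*v*(1 - cos phi) <= r*v*(phi*phi/2)) by (apply Rmult_le_compat_l; lra). rewrite EA. nra. }
  unfold H. fold r A B. 
  assert (Hq : 0 < 1 - Cmod (RtoC v) ^ 2).
  { rewrite Cmod_R, Rabs_right by lra. nra. }
  set (Q := Rpower (1 - Cmod (RtoC v) ^ 2) (alpha + 1)).
  assert (HQ : 0 < Q) by apply exp_pos.
  assert (HQe : 1 - Cmod (RtoC v) ^ 2 = 1 - v^2) by (rewrite Cmod_R, Rabs_right by lra; ring).
  apply div_le; [apply Rmult_lt_0_compat; [apply pow_lt; lra| exact HQ]|apply pow_lt; lra|].
  assert (EPA : Rpower A (2 * (INR n + alpha + 1)) = (A^2)^n * Rpower (A^2) (alpha+1)).
  { rewrite <- (Rpower_pow n (A^2)) by (apply pow_lt; lra).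
    rewrite <- Rpower_plus. rewrite <- (Rpower_pow 2 A) by lra.
    rewrite Rpower_mult. f_equal. simpl INR. ring. }
  assert (ET : Rpower 2 (INR n + alpha + 1) * Rpower (1 - v * Rr) (2 * INR n + alpha + 1)
     = (2 * (1 - v*Rr)^2)^n * Rpower (2 * (1 - v*Rr)) (alpha+1)).
  { rewrite <- Rpower_mult_distr by nra.
    replace (INR n + alpha + 1) with (INR n + (alpha+1)) by ring.
    replace (2 * INR n + alpha + 1) with (INR (2*n) + (alpha+1)) by (rewrite mult_INR; simpl; ring).
    rewrite !Rpower_plus, !Rpower_pow by nra. rewrite Rpow_mult_distr, pow_mult. ring. }
  rewrite EPA, ET.
  assert (Hmono : Rpower (A^2) (alpha+1) <= Rpower (2 * (1 - v*Rr)) (alpha+1) * Q).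
  { unfold Q. rewrite HQe. rewrite Rpower_mult_distr by nra.
    apply Rle_Rpower_l; [lra|]. split; [nra|].
    assert (0 <= (1 - v*Rr)) by nra. assert (1 - v*Rr <= 1 - v^2) by nra. nra. }
  assert (Hpn : (A^2)^n <= (2 * (1 - v*Rr)^2)^n).
  { apply pow_incr. split; nra. }
  assert (Hrn : r^(2*n) * (1 - v/Rr)^(2*n) <= B^(2*n)).
  { rewrite <- Rpow_mult_distr. apply pow_incr. split; [|exact HB]. apply Rmult_le_pos; lra. }
  assert (0 <= Rpower (A^2) (alpha+1)) by (left; apply exp_pos).
  assert (0 <= (A^2)^n) by (apply pow_le; nra).
  assert (0 <= r^(2*n) * (1 - v/Rr)^(2*n)) by (apply Rmult_le_pos; apply pow_le; lra).
  replace (r ^ (2 * n) * ((A ^ 2) ^ n * Rpower (A ^ 2) (alpha + 1)) * (1 - v / Rr) ^ (2 * n))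
    with ((r ^ (2 * n) * (1 - v / Rr) ^ (2 * n)) * ((A ^ 2) ^ n * Rpower (A ^ 2) (alpha + 1))) by ring.
  replace ((2 * (1 - v * Rr) ^ 2) ^ n * Rpower (2 * (1 - v * Rr)) (alpha + 1) * (B ^ (2 * n) * Q))
    with (B ^ (2 * n) * ((2 * (1 - v * Rr) ^ 2) ^ n * (Rpower (2 * (1 - v * Rr)) (alpha + 1) * Q))) by ring.
  apply Rmult_le_compat; try assumption.
  - apply Rmult_le_pos; assumption.
  - apply Rmult_le_compat; assumption.
Qed.
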